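(* If $S\subseteq\mathbb N^d$ is a PI-monoid, then there exist a unique submonoid $T$ of $\mathbb N^d$ and a unique $\mathbf a\in T\setminus\{0\}$ such that $S=(\mathbf a+T)\cup\{0\}$.
   Context: A submonoid $S$ of $\mathbb N^d$ is a PI-monoid if there exist a submonoid $T$ of $\mathbb N^d$ and $\mathbf a\in T\setminus\{0\}$ with $S=(\mathbf a+T)\cup\{0\}$. *)

(* Defs.v *)
(* Points of N^d are finite functions 'I_d -> nat;
   subsets of N^d are predicates (possibly infinite). *)
From mathcomp Require Import all_boot.
Set Implicit Arguments. Unset Strict Implicit. Unset Printing Implicit Defensive.

Definition vec (d : nat) := {ffun 'I_d -> nat}.

Definition vzero (d : nat) : vec d := [ffun _ => 0].
Definition vadd (d : nat) (x y : vec d) : vec d := [ffun i => x i + y i].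

Definition submonoid (d : nat) (S : vec d -> Prop) : Prop :=
  S (vzero d) /\ forall x y, S x -> S y -> S (vadd x y).

Definition shifted_union (d : nat) (S T : vec d -> Prop) (a : vec d) : Prop :=
  forall x, S x <-> (x = vzero d \/ exists t, T t /\ x = vadd a t).

Definition PI_monoid (d : nat) (S : vec d -> Prop) : Prop :=
  submonoid S /\
  exists (T : vec d -> Prop) (a : vec d),
    submonoid T /\ T a /\ a <> vzero d /\ shifted_union S T a.

(* Main.v *)
Require Import Defs.
From mathcomp Require Import all_boot.

Lemma vadd_inj d (a x y : vec d) : vadd a x = vadd a y -> x = y.
Proof.
move=> H; apply/ffunP => i; have := congr1 (fun f : vec d => f i) H.
by rewrite /vadd !ffunE => /addnI.
Qed.

Lemma vadd0 d (a : vec d) : vadd a (vzero d) = a.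
Proof. by apply/ffunP => i; rewrite /vadd /vzero !ffunE addn0. Qed.

Lemma vadd_ne0 d (a x : vec d) : a <> vzero d -> vadd a x <> vzero d.
Proof.
move=> Ha H; apply: Ha; apply/ffunP => i.
have := congr1 (fun f : vec d => f i) H; rewrite /vadd /vzero !ffunE.
by move/eqP; rewrite addn_eq0 => /andP[/eqP -> _].
Qed.

Lemma min_elt d (S T : vec d -> Prop) a :
  a <> vzero d -> shifted_union S T a ->
  forall x, S x -> x <> vzero d -> forall i, a i <= x i.
Proof.
move=> Ha HS x /HS [->|[t [_ ->]]] // _ i.
by rewrite /vadd ffunE leq_addr.
Qed.

Lemma S_a d (S T : vec d -> Prop) a :
  submonoid T -> shifted_union S T a -> S a.
Proof.
move=> [T0 _] HS; apply/HS; right; exists (vzero d); split => //.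
by rewrite vadd0.
Qed.

Theorem corollary5p6 (d : nat) (S : vec d -> Prop) :
  PI_monoid S ->
  exists (T : vec d -> Prop) (a : vec d),
    (submonoid T /\ T a /\ a <> vzero d /\ shifted_union S T a) /\
    forall (T' : vec d -> Prop) (a' : vec d),
      submonoid T' -> T' a' -> a' <> vzero d -> shifted_union S T' a' ->
      (forall x, T' x <-> T x) /\ a' = a.
Proof.
move=> [_ [T [a [HT [Ta [Ha HS]]]]]].
exists T, a; split; first by [].
move=> T' a' HT' Ta' Ha' HS'.
have Ea : a' = a.
  apply/ffunP => i; apply/eqP; rewrite eqn_leq.
  rewrite (min_elt _ _ _ _ Ha' HS' a (S_a _ _ _ _ HT HS) Ha i).
  by rewrite (min_elt _ _ _ _ Ha HS a' (S_a _ _ _ _ HT' HS') Ha' i).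
subst a'; split => // x.
have key : forall U : vec d -> Prop, shifted_union S U a -> (U x <-> S (vadd a x)).
  move=> U HU; split.
    by move=> Ux; apply/HU; right; exists x.
  move/HU => [/(vadd_ne0 _ _ x Ha) //|[t [Ut /vadd_inj ->]]] //.
have := key _ HS'; have := key _ HS; tauto.
Qed.
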